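(* There exists $n \geq 1$ such that the set of PC prographs of size $n$, ordered by $P \leq Q$ if $Q$ can be obtained from $P$ by a finite (possibly empty) sequence of the four rotations, is a poset that is not a lattice.
   Context: A PC prograph of size $n$ is a finite connected directed acyclic graph embedded in the plane (up to isotopy), drawn so that all edges go upward, whose $2n$ vertices are $n$ coproducts (one incoming edge, two outgoing edges distinguished as left and right) and $n$ products (two incoming edges distinguished as left and right, one outgoing edge); exactly one coproduct has its incoming slot unconnected (global input, at the bottom) and exactly one product has its outgoing slot unconnected (global output, at the top); all other slots are joined by edges. The four rotations are local rewritings of a configuration of two adjacent operators; in each, the boundary edges of the configuration, ordered left to right among inputs and among outputs, are reattached in the same order. Writing $\mu$ for a product, $\Delta$ for a coproduct, and composing configurations from bottom to top as in string diagrams: (1) $(\mathrm{id}\otimes\Delta)\circ\Delta \to (\Delta\otimes\mathrm{id})\circ\Delta$ (a coproduct on the right output of a coproduct becomes a coproduct on the left output of a coproduct); (2) $\mu\circ(\mu\otimes\mathrm{id}) \to \mu\circ(\mathrm{id}\otimes\mu)$; (3) $(\mu\otimes\mathrm{id})\circ(\mathrm{id}\otimes\Delta) \to \Delta\circ\mu$ (a coproduct whose left output enters the right input of a product, with two inputs and two outputs, becomes a product whose output enters a coproduct); (4) $\Delta\circ\mu \to (\mathrm{id}\otimes\mu)\circ(\Delta\otimes\mathrm{id})$ (a product whose output enters a coproduct becomes a coproduct whose right output enters the left input of a product). *)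

(* Defs.v *)
(* PC prographs encoded as progressive string diagrams:
   sequences of "layers" id_a (x) g (x) id_b (g = product or coproduct),
   read bottom to top, modulo the interchange law (= planar isotopy,
   Joyal--Street). *)
From Stdlib Require Import List Arith Relations.
Import ListNotations.

Inductive op : Type := Mu | Delta .

Definition ar_in (g : op) : nat := match g with Mu => 2 | Delta => 1 end.
Definition ar_out (g : op) : nat := match g with Mu => 1 | Delta => 2 end.

(* a layer (a, g, b) denotes id_a (x) g (x) id_b *)
Definition layer : Type := (nat * op * nat)%type.
Definition lop (l : layer) : op := snd (fst l).
Definition in_w (l : layer) : nat := fst (fst l) + ar_in (lop l) + snd l.
Definition out_w (l : layer) : nat := fst (fst l) + ar_out (lop l) + snd l.

Definition diagram : Type := list layer.

Fixpoint typed (w : nat) (D : diagram) (w' : nat) : Prop :=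
  match D with
  | [] => w = w'
  | l :: D' => in_w l = w /\ typed (out_w l) D' w'
  end.

Definition nb_op (g : op) (D : diagram) : nat :=
  length (filter (fun l => match lop l, g with
                           | Mu, Mu | Delta, Delta => true
                           | _, _ => false end) D).

(* PC prograph of size n: a 1 -> 1 diagram with n products and n coproducts
   (connectedness, unique global input/output follow automatically). *)
Definition prograph (n : nat) (D : diagram) : Prop :=
  typed 1 D 1 /\ nb_op Mu D = n /\ nb_op Delta D = n.

Definition in_context (R : list layer -> list layer -> Prop) : diagram -> diagram -> Prop :=
  fun D D' => exists pre post x y, R x y /\ D = pre ++ x ++ post /\ D' = pre ++ y ++ post.

(* interchange law: id_a (x) g1 (x) id_c (x) g2 (x) id_b computed in two orders *)
Definition interchange (x y : list layer) : Prop :=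
  exists a c b g1 g2,
    x = [(a, g1, c + ar_in g2 + b); (a + ar_out g1 + c, g2, b)] /\
    y = [(a + ar_in g1 + c, g2, b); (a, g1, c + ar_out g2 + b)].

Definition iso_step (D D' : diagram) : Prop :=
  in_context interchange D D' \/ in_context interchange D' D.

Definition isotopic : diagram -> diagram -> Prop := clos_refl_trans _ iso_step.

(* the four rotations, bottom layer first *)
Definition rotation (x y : list layer) : Prop :=
  exists a b,
    (* (1) (id (x) D) o D  ->  (D (x) id) o D *)
    (x = [(a, Delta, b); (a + 1, Delta, b)] /\ y = [(a, Delta, b); (a, Delta, b + 1)])
    (* (2) mu o (mu (x) id)  ->  mu o (id (x) mu) *)
 \/ (x = [(a, Mu, b + 1); (a, Mu, b)] /\ y = [(a + 1, Mu, b); (a, Mu, b)])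
    (* (3) (mu (x) id) o (id (x) D)  ->  D o mu *)
 \/ (x = [(a + 1, Delta, b); (a, Mu, b + 1)] /\ y = [(a, Mu, b); (a, Delta, b)])
    (* (4) D o mu  ->  (id (x) mu) o (D (x) id) *)
 \/ (x = [(a, Mu, b); (a, Delta, b)] /\ y = [(a, Delta, b + 1); (a + 1, Mu, b)]).

Definition prle : diagram -> diagram -> Prop :=
  clos_refl_trans _ (fun D D' => iso_step D D' \/ in_context rotation D D').

Definition is_join (n : nat) (P Q J : diagram) : Prop :=
  prograph n J /\ prle P J /\ prle Q J /\
  (forall U, prograph n U -> prle P U -> prle Q U -> prle J U).

Definition is_meet (n : nat) (P Q M : diagram) : Prop :=
  prograph n M /\ prle M P /\ prle M Q /\
  (forall L, prograph n L -> prle L P -> prle L Q -> prle L M).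

Definition is_poset_n (n : nat) : Prop :=
  forall P Q, prograph n P -> prograph n Q -> prle P Q -> prle Q P -> isotopic P Q.

Definition is_lattice_n (n : nat) : Prop :=
  forall P Q, prograph n P -> prograph n Q ->
    (exists J, is_join n P Q J) /\ (exists M, is_meet n P Q M).

(* Main.v *)
Require Import Defs.
From Stdlib Require Import List Arith Relations Lia.
Import ListNotations.
From Stdlib Require Import Bool.
Local Open Scope bool_scope.

Definition op_eq_dec (x y : op) : {x = y} + {x <> y}.
Proof. decide equality. Defined.
Definition layer_eq_dec (x y : layer) : {x = y} + {x <> y}.
Proof. decide equality; try apply Nat.eq_dec; decide equality; try apply Nat.eq_dec; apply op_eq_dec. Defined.
Definition diag_eq_dec := list_eq_dec layer_eq_dec.
Definition memb (d : diagram) (L : list diagram) : bool :=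
  if in_dec diag_eq_dec d L then true else false.
Lemma memb_In d L : memb d L = true -> In d L.
Proof. unfold memb; destruct (in_dec diag_eq_dec d L); [auto | discriminate]. Qed.

Fixpoint genall (k w : nat) : list diagram :=
  match k with
  | 0 => if Nat.eqb w 1 then [[]] else []
  | S k' => flat_map (fun a => map (cons (a,Delta,w-1-a)) (genall k' (w+1))) (seq 0 w)
         ++ flat_map (fun a => map (cons (a,Mu,w-2-a)) (genall k' (w-1))) (seq 0 (w-1))
  end.

Lemma genall_complete : forall D w, typed w D 1 -> In D (genall (length D) w).
Proof.
  induction D as [|l D IH]; intros w H.
  - simpl in *. subst. simpl. left. reflexivity.
  - destruct H as [H1 H2]. destruct l as [[a g] b].
    unfold in_w, out_w, lop in *; simpl in *.
    apply in_or_app. destruct g; simpl in *.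
    + right. apply in_flat_map. exists a. split.
      * apply in_seq. lia.
      * apply in_map_iff. exists D. split.
        -- replace (w-2-a) with b by lia. reflexivity.
        -- replace (w-1) with (a+1+b) by lia. apply IH. exact H2.
    + left. apply in_flat_map. exists a. split.
      * apply in_seq. lia.
      * apply in_map_iff. exists D. split.
        -- replace (w-1-a) with b by lia. reflexivity.
        -- replace (w+1) with (a+2+b) by lia. apply IH. exact H2.
Qed.

Lemma nb_len : forall D, nb_op Mu D + nb_op Delta D = length D.
Proof.
  induction D as [|l D IH]; simpl; auto.
  unfold nb_op in *; simpl. destruct (lop l); simpl; lia.
Qed.

Definition all3 := genall 6 1.

Lemma prograph3_in : forall D, prograph 3 D -> In D all3.
Proof.
  intros D [H1 [H2 H3]]. pose proof (nb_len D).
  replace all3 with (genall (length D) 1) by (unfold all3; f_equal; lia).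
  apply genall_complete; auto.
Qed.

Fixpoint ctx (f : layer -> layer -> list (list layer)) (D : diagram) : list diagram :=
  match D with
  | l1 :: t => (match t with l2 :: r => map (fun y => y ++ r) (f l1 l2) | [] => [] end)
               ++ map (cons l1) (ctx f t)
  | [] => []
  end.

Lemma ctx_complete (R : list layer -> list layer -> Prop) f :
  (forall x y, R x y -> exists l1 l2, x = [l1; l2] /\ In y (f l1 l2)) ->
  forall D D', in_context R D D' -> In D' (ctx f D).
Proof.
  intros Hf D D' [pre [post [x [y [Hr [E1 E2]]]]]]. subst.
  destruct (Hf _ _ Hr) as [l1 [l2 [Ex Hy]]]. subst x.
  induction pre as [|p pre IH]; simpl.
  - apply in_or_app. left. apply in_map_iff. eauto.
  - apply in_or_app. right. apply in_map. exact IH.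
Qed.

Definition finter (l1 l2 : layer) : list (list layer) :=
  match l1, l2 with
  | (a, g1, r1), (a2, g2, b) =>
    if (a + ar_out g1 <=? a2) && (r1 =? (a2 - a - ar_out g1) + ar_in g2 + b)
    then [[(a + ar_in g1 + (a2 - a - ar_out g1), g2, b); (a, g1, (a2 - a - ar_out g1) + ar_out g2 + b)]]
    else []
  end.

Definition finterr (l1 l2 : layer) : list (list layer) :=
  match l1, l2 with
  | (p, g2, b), (a, g1, q) =>
    if (a + ar_in g1 <=? p) && (q =? (p - a - ar_in g1) + ar_out g2 + b)
    then [[(a, g1, (p - a - ar_in g1) + ar_in g2 + b); (a + ar_out g1 + (p - a - ar_in g1), g2, b)]]
    else []
  end.

Definition frot (l1 l2 : layer) : list (list layer) :=
  match l1, l2 with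
  | (a, g, b), (a2, g2, b2) =>
    match g, g2 with
    | Delta, Delta => if (a2 =? a+1) && (b2 =? b) then [[(a,Delta,b);(a,Delta,b+1)]] else []
    | Mu, Mu => if (a2 =? a) && (b =? b2+1) then [[(a+1,Mu,b2);(a,Mu,b2)]] else []
    | Delta, Mu => if (1 <=? a) && (a2 =? a-1) && (b2 =? b+1) then [[(a-1,Mu,b);(a-1,Delta,b)]] else []
    | Mu, Delta => if (a2 =? a) && (b2 =? b) then [[(a,Delta,b+1);(a+1,Mu,b)]] else []
    end
  end.

Ltac bsimp := repeat match goal with
  | |- context [?x =? ?y] => replace (x =? y) with true by (symmetry; apply Nat.eqb_eq; lia)
  | |- context [?x <=? ?y] => replace (x <=? y) with true by (symmetry; apply Nat.leb_le; lia)
  end.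

Lemma finter_ok : forall x y, interchange x y -> exists l1 l2, x = [l1; l2] /\ In y (finter l1 l2).
Proof.
  intros x y [a [c [b [g1 [g2 [Ex Ey]]]]]]. subst. do 2 eexists. split; [reflexivity|].
  simpl. bsimp. simpl. left.
  replace (a + ar_out g1 + c - a - ar_out g1) with c by lia. reflexivity.
Qed.

Lemma finterr_ok : forall x y, interchange y x -> exists l1 l2, x = [l1; l2] /\ In y (finterr l1 l2).
Proof.
  intros x y [a [c [b [g1 [g2 [Ex Ey]]]]]]. subst. do 2 eexists. split; [reflexivity|].
  simpl. bsimp. simpl. left.
  replace (a + ar_in g1 + c - a - ar_in g1) with c by lia. reflexivity.
Qed.

Lemma frot_ok : forall x y, rotation x y -> exists l1 l2, x = [l1; l2] /\ In y (frot l1 l2).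
Proof.
  intros x y [a [b H]].
  destruct H as [[E1 E2]|[[E1 E2]|[[E1 E2]|[E1 E2]]]]; subst; do 2 eexists; split; try reflexivity;
    simpl; bsimp; simpl.
  all: try (rewrite !Nat.add_1_r; simpl; rewrite ?Nat.sub_0_r); left; reflexivity.
Qed.

Definition isucc (D : diagram) := ctx finter D ++ ctx finterr D.
Definition rsucc (D : diagram) := ctx frot D.

Lemma iso_in : forall D D', iso_step D D' -> In D' (isucc D).
Proof.
  intros D D' [H|H]; apply in_or_app.
  - left. exact (ctx_complete _ _ finter_ok _ _ H).
  - right. apply (ctx_complete (fun x y => interchange y x) _ finterr_ok).
    destruct H as [pre [post [x [y [Hr [E1 E2]]]]]].
    exists pre, post, y, x. auto.
Qed.

Lemma rot_in : forall D D', in_context rotation D D' -> In D' (rsucc D).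
Proof. intros. exact (ctx_complete _ _ frot_ok _ _ H). Qed.

Ltac rot_tac a b := exists a, b;
  first [left; split; reflexivity | right; left; split; reflexivity
        | right; right; left; split; reflexivity | right; right; right; split; reflexivity].

Definition tbl : list (diagram * nat * nat) := [
  ([(0,Delta,0); (0,Delta,1); (0,Delta,2); (0,Mu,2); (0,Mu,1); (0,Mu,0)], 0, 3);
  ([(0,Delta,0); (0,Delta,1); (0,Delta,2); (0,Mu,2); (1,Mu,0); (0,Mu,0)], 1, 6);
  ([(0,Delta,0); (0,Delta,1); (0,Delta,2); (1,Mu,1); (0,Mu,1); (0,Mu,0)], 2, 4);
  ([(0,Delta,0); (0,Delta,1); (0,Delta,2); (1,Mu,1); (1,Mu,0); (0,Mu,0)], 3, 7);
  ([(0,Delta,0); (0,Delta,1); (0,Delta,2); (2,Mu,0); (0,Mu,1); (0,Mu,0)], 1, 6);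
  ([(0,Delta,0); (0,Delta,1); (0,Delta,2); (2,Mu,0); (1,Mu,0); (0,Mu,0)], 4, 8);
  ([(0,Delta,0); (0,Delta,1); (1,Delta,1); (0,Mu,2); (0,Mu,1); (0,Mu,0)], 5, 2);
  ([(0,Delta,0); (0,Delta,1); (1,Delta,1); (0,Mu,2); (1,Mu,0); (0,Mu,0)], 6, 5);
  ([(0,Delta,0); (0,Delta,1); (1,Delta,1); (1,Mu,1); (0,Mu,1); (0,Mu,0)], 7, 3);
  ([(0,Delta,0); (0,Delta,1); (1,Delta,1); (1,Mu,1); (1,Mu,0); (0,Mu,0)], 8, 4);
  ([(0,Delta,0); (0,Delta,1); (1,Delta,1); (2,Mu,0); (0,Mu,1); (0,Mu,0)], 6, 5);
  ([(0,Delta,0); (0,Delta,1); (1,Delta,1); (2,Mu,0); (1,Mu,0); (0,Mu,0)], 9, 7);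
  ([(0,Delta,0); (0,Delta,1); (2,Delta,0); (0,Mu,2); (0,Mu,1); (0,Mu,0)], 10, 1);
  ([(0,Delta,0); (0,Delta,1); (2,Delta,0); (0,Mu,2); (1,Mu,0); (0,Mu,0)], 11, 2);
  ([(0,Delta,0); (0,Delta,1); (2,Delta,0); (1,Mu,1); (0,Mu,1); (0,Mu,0)], 12, 3);
  ([(0,Delta,0); (0,Delta,1); (2,Delta,0); (1,Mu,1); (1,Mu,0); (0,Mu,0)], 13, 5);
  ([(0,Delta,0); (0,Delta,1); (2,Delta,0); (2,Mu,0); (0,Mu,1); (0,Mu,0)], 11, 2);
  ([(0,Delta,0); (0,Delta,1); (2,Delta,0); (2,Mu,0); (1,Mu,0); (0,Mu,0)], 14, 6);
  ([(0,Delta,0); (0,Delta,1); (0,Mu,1); (0,Delta,1); (0,Mu,1); (0,Mu,0)], 15, 3);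
  ([(0,Delta,0); (0,Delta,1); (0,Mu,1); (0,Delta,1); (1,Mu,0); (0,Mu,0)], 16, 6);
  ([(0,Delta,0); (0,Delta,1); (0,Mu,1); (1,Delta,0); (0,Mu,1); (0,Mu,0)], 10, 1);
  ([(0,Delta,0); (0,Delta,1); (0,Mu,1); (1,Delta,0); (1,Mu,0); (0,Mu,0)], 11, 2);
  ([(0,Delta,0); (0,Delta,1); (0,Mu,1); (0,Mu,0); (0,Delta,0); (0,Mu,0)], 17, 2);
  ([(0,Delta,0); (0,Delta,1); (1,Mu,0); (0,Delta,1); (0,Mu,1); (0,Mu,0)], 1, 6);
  ([(0,Delta,0); (0,Delta,1); (1,Mu,0); (0,Delta,1); (1,Mu,0); (0,Mu,0)], 4, 8);
  ([(0,Delta,0); (0,Delta,1); (1,Mu,0); (1,Delta,0); (0,Mu,1); (0,Mu,0)], 18, 4);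
  ([(0,Delta,0); (0,Delta,1); (1,Mu,0); (1,Delta,0); (1,Mu,0); (0,Mu,0)], 19, 6);
  ([(0,Delta,0); (0,Delta,1); (1,Mu,0); (0,Mu,0); (0,Delta,0); (0,Mu,0)], 20, 5);
  ([(0,Delta,0); (1,Delta,0); (0,Delta,2); (0,Mu,2); (0,Mu,1); (0,Mu,0)], 10, 1);
  ([(0,Delta,0); (1,Delta,0); (0,Delta,2); (0,Mu,2); (1,Mu,0); (0,Mu,0)], 11, 2);
  ([(0,Delta,0); (1,Delta,0); (0,Delta,2); (1,Mu,1); (0,Mu,1); (0,Mu,0)], 12, 3);
  ([(0,Delta,0); (1,Delta,0); (0,Delta,2); (1,Mu,1); (1,Mu,0); (0,Mu,0)], 13, 5);
  ([(0,Delta,0); (1,Delta,0); (0,Delta,2); (2,Mu,0); (0,Mu,1); (0,Mu,0)], 11, 2);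
  ([(0,Delta,0); (1,Delta,0); (0,Delta,2); (2,Mu,0); (1,Mu,0); (0,Mu,0)], 14, 6);
  ([(0,Delta,0); (1,Delta,0); (1,Delta,1); (0,Mu,2); (0,Mu,1); (0,Mu,0)], 21, 1);
  ([(0,Delta,0); (1,Delta,0); (1,Delta,1); (0,Mu,2); (1,Mu,0); (0,Mu,0)], 22, 3);
  ([(0,Delta,0); (1,Delta,0); (1,Delta,1); (1,Mu,1); (0,Mu,1); (0,Mu,0)], 23, 2);
  ([(0,Delta,0); (1,Delta,0); (1,Delta,1); (1,Mu,1); (1,Mu,0); (0,Mu,0)], 24, 3);
  ([(0,Delta,0); (1,Delta,0); (1,Delta,1); (2,Mu,0); (0,Mu,1); (0,Mu,0)], 22, 3);
  ([(0,Delta,0); (1,Delta,0); (1,Delta,1); (2,Mu,0); (1,Mu,0); (0,Mu,0)], 25, 4);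
  ([(0,Delta,0); (1,Delta,0); (2,Delta,0); (0,Mu,2); (0,Mu,1); (0,Mu,0)], 26, 0);
  ([(0,Delta,0); (1,Delta,0); (2,Delta,0); (0,Mu,2); (1,Mu,0); (0,Mu,0)], 27, 1);
  ([(0,Delta,0); (1,Delta,0); (2,Delta,0); (1,Mu,1); (0,Mu,1); (0,Mu,0)], 28, 1);
  ([(0,Delta,0); (1,Delta,0); (2,Delta,0); (1,Mu,1); (1,Mu,0); (0,Mu,0)], 29, 2);
  ([(0,Delta,0); (1,Delta,0); (2,Delta,0); (2,Mu,0); (0,Mu,1); (0,Mu,0)], 27, 1);
  ([(0,Delta,0); (1,Delta,0); (2,Delta,0); (2,Mu,0); (1,Mu,0); (0,Mu,0)], 30, 3);
  ([(0,Delta,0); (1,Delta,0); (0,Mu,1); (0,Delta,1); (0,Mu,1); (0,Mu,0)], 31, 2);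
  ([(0,Delta,0); (1,Delta,0); (0,Mu,1); (0,Delta,1); (1,Mu,0); (0,Mu,0)], 32, 4);
  ([(0,Delta,0); (1,Delta,0); (0,Mu,1); (1,Delta,0); (0,Mu,1); (0,Mu,0)], 26, 0);
  ([(0,Delta,0); (1,Delta,0); (0,Mu,1); (1,Delta,0); (1,Mu,0); (0,Mu,0)], 27, 1);
  ([(0,Delta,0); (1,Delta,0); (0,Mu,1); (0,Mu,0); (0,Delta,0); (0,Mu,0)], 33, 1);
  ([(0,Delta,0); (1,Delta,0); (1,Mu,0); (0,Delta,1); (0,Mu,1); (0,Mu,0)], 11, 2);
  ([(0,Delta,0); (1,Delta,0); (1,Mu,0); (0,Delta,1); (1,Mu,0); (0,Mu,0)], 14, 6);
  ([(0,Delta,0); (1,Delta,0); (1,Mu,0); (1,Delta,0); (0,Mu,1); (0,Mu,0)], 34, 2);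
  ([(0,Delta,0); (1,Delta,0); (1,Mu,0); (1,Delta,0); (1,Mu,0); (0,Mu,0)], 35, 3);
  ([(0,Delta,0); (1,Delta,0); (1,Mu,0); (0,Mu,0); (0,Delta,0); (0,Mu,0)], 36, 3);
  ([(0,Delta,0); (0,Mu,0); (0,Delta,0); (0,Delta,1); (0,Mu,1); (0,Mu,0)], 37, 3);
  ([(0,Delta,0); (0,Mu,0); (0,Delta,0); (0,Delta,1); (1,Mu,0); (0,Mu,0)], 38, 5);
  ([(0,Delta,0); (0,Mu,0); (0,Delta,0); (1,Delta,0); (0,Mu,1); (0,Mu,0)], 39, 1);
  ([(0,Delta,0); (0,Mu,0); (0,Delta,0); (1,Delta,0); (1,Mu,0); (0,Mu,0)], 40, 2);
  ([(0,Delta,0); (0,Mu,0); (0,Delta,0); (0,Mu,0); (0,Delta,0); (0,Mu,0)], 41, 2)].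
Definition Rtab : list (list nat) := [
  [0; 1; 2; 3; 4];
  [1; 4];
  [2; 3; 4];
  [3; 4];
  [4];
  [0; 1; 2; 3; 4; 5; 6; 7; 8; 9; 15; 16];
  [1; 3; 4; 6; 9; 16];
  [2; 3; 4; 7; 8; 9];
  [3; 4; 8; 9];
  [4; 9];
  [0; 1; 2; 3; 4; 6; 9; 10; 11; 12; 13; 14; 16; 17; 18; 19; 20];
  [1; 4; 11; 14];
  [1; 2; 3; 4; 6; 9; 12; 13; 14; 16; 18; 19; 20];
  [3; 4; 9; 13; 14; 19];
  [4; 14];
  [2; 3; 4; 15; 16];
  [3; 4; 16];
  [3; 4; 16; 17; 20];
  [1; 3; 4; 6; 9; 16; 18; 19; 20];
  [4; 9; 19];
  [4; 20];
  [0; 1; 2; 3; 4; 5; 6; 7; 8; 9; 12; 13; 14; 15; 16; 18; 19; 20; 21; 22; 23; 24; 25; 31; 32; 37; 38];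
  [1; 3; 4; 6; 9; 13; 14; 16; 19; 22; 25; 32; 38];
  [2; 3; 4; 7; 8; 9; 23; 24; 25];
  [3; 4; 8; 9; 24; 25];
  [4; 9; 25];
  [0; 1; 2; 3; 4; 5; 6; 7; 8; 9; 10; 11; 12; 13; 14; 15; 16; 17; 18; 19; 20; 21; 22; 23; 24; 25; 26; 27; 28; 29; 30; 31; 32; 33; 34; 35; 36; 37; 38; 39; 40; 41];
  [1; 3; 4; 6; 9; 11; 13; 14; 16; 19; 22; 25; 27; 30; 32; 38; 40];
  [1; 2; 3; 4; 6; 7; 8; 9; 12; 13; 14; 16; 18; 19; 20; 22; 23; 24; 25; 28; 29; 30; 32; 34; 35; 36; 38];
  [3; 4; 8; 9; 13; 14; 19; 24; 25; 29; 30; 35];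
  [4; 9; 14; 25; 30];
  [1; 2; 3; 4; 6; 9; 12; 13; 14; 15; 16; 18; 19; 20; 31; 32; 37; 38];
  [3; 4; 9; 13; 14; 16; 19; 32; 38];
  [3; 4; 9; 13; 14; 16; 17; 19; 20; 32; 33; 36; 38; 41];
  [1; 3; 4; 6; 9; 13; 14; 16; 18; 19; 20; 22; 25; 32; 34; 35; 36; 38];
  [4; 9; 19; 25; 35];
  [4; 14; 20; 36];
  [1; 4; 37; 38];
  [4; 38];
  [1; 3; 4; 6; 9; 16; 18; 19; 20; 37; 38; 39; 40; 41];
  [4; 9; 19; 38; 40];
  [4; 20; 38; 41]].
Definition dP : diagram := [(0,Delta,0); (0,Delta,1); (0,Delta,2); (0,Mu,2); (0,Mu,1); (0,Mu,0)].
Definition dQ : diagram := [(0,Delta,0); (0,Delta,1); (1,Delta,1); (0,Mu,2); (1,Mu,0); (0,Mu,0)].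
Definition dU1 : diagram := [(0,Delta,0); (0,Delta,1); (0,Delta,2); (0,Mu,2); (1,Mu,0); (0,Mu,0)].
Definition dU2 : diagram := [(0,Delta,0); (0,Delta,1); (0,Delta,2); (1,Mu,1); (1,Mu,0); (0,Mu,0)].
Definition cP := 0. Definition cQ := 6. Definition c1 := 1. Definition c2 := 3.
Lemma prle_PU1 : prle dP dU1.
Proof.
  apply rt_trans with [(0,Delta,0); (0,Delta,1); (0,Delta,2); (0,Mu,2); (1,Mu,0); (0,Mu,0)]; [apply rt_step; right; exists [(0,Delta,0); (0,Delta,1); (0,Delta,2); (0,Mu,2)], [], [(0,Mu,1); (0,Mu,0)], [(1,Mu,0); (0,Mu,0)]; split; [rot_tac 0 0 | split; reflexivity] |].
  apply rt_refl.
Qed.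
Lemma prle_QU1 : prle dQ dU1.
Proof.
  apply rt_trans with [(0,Delta,0); (0,Delta,1); (0,Delta,2); (0,Mu,2); (1,Mu,0); (0,Mu,0)]; [apply rt_step; right; exists [(0,Delta,0)], [(0,Mu,2); (1,Mu,0); (0,Mu,0)], [(0,Delta,1); (1,Delta,1)], [(0,Delta,1); (0,Delta,2)]; split; [rot_tac 0 1 | split; reflexivity] |].
  apply rt_refl.
Qed.
Lemma prle_PU2 : prle dP dU2.
Proof.
  apply rt_trans with [(0,Delta,0); (0,Delta,1); (0,Delta,2); (1,Mu,1); (0,Mu,1); (0,Mu,0)]; [apply rt_step; right; exists [(0,Delta,0); (0,Delta,1); (0,Delta,2)], [(0,Mu,0)], [(0,Mu,2); (0,Mu,1)], [(1,Mu,1); (0,Mu,1)]; split; [rot_tac 0 1 | split; reflexivity] |].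
  apply rt_trans with [(0,Delta,0); (0,Delta,1); (0,Delta,2); (1,Mu,1); (1,Mu,0); (0,Mu,0)]; [apply rt_step; right; exists [(0,Delta,0); (0,Delta,1); (0,Delta,2); (1,Mu,1)], [], [(0,Mu,1); (0,Mu,0)], [(1,Mu,0); (0,Mu,0)]; split; [rot_tac 0 0 | split; reflexivity] |].
  apply rt_refl.
Qed.
Lemma prle_QU2 : prle dQ dU2.
Proof.
  apply rt_trans with [(0,Delta,0); (0,Delta,1); (0,Mu,1); (0,Delta,1); (1,Mu,0); (0,Mu,0)]; [apply rt_step; right; exists [(0,Delta,0); (0,Delta,1)], [(1,Mu,0); (0,Mu,0)], [(1,Delta,1); (0,Mu,2)], [(0,Mu,1); (0,Delta,1)]; split; [rot_tac 0 1 | split; reflexivity] |].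
  apply rt_trans with [(0,Delta,0); (0,Delta,1); (0,Delta,2); (1,Mu,1); (1,Mu,0); (0,Mu,0)]; [apply rt_step; right; exists [(0,Delta,0); (0,Delta,1)], [(1,Mu,0); (0,Mu,0)], [(0,Mu,1); (0,Delta,1)], [(0,Delta,2); (1,Mu,1)]; split; [rot_tac 0 1 | split; reflexivity] |].
  apply rt_refl.
Qed.

Fixpoint lookup (D : diagram) (t : list (diagram * nat * nat)) : nat * nat :=
  match t with
  | [] => (0, 0)
  | (d, c, r) :: t' => if diag_eq_dec D d then (c, r) else lookup D t'
  end.
Definition clsf D := fst (lookup D tbl).
Definition rankf D := snd (lookup D tbl).
Definition Rmem (c c' : nat) : bool := existsb (Nat.eqb c') (nth c Rtab []).
Definition Rsub (c1 c0 : nat) : bool := forallb (fun c => Rmem c0 c) (nth c1 Rtab []).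

Definition check_iso := forallb (fun D => forallb (fun D' =>
  memb D' all3 && (rankf D' =? rankf D) && Rsub (clsf D') (clsf D)) (isucc D)) all3.
Definition check_rot := forallb (fun D => forallb (fun D' =>
  memb D' all3 && (rankf D <? rankf D') && Rsub (clsf D') (clsf D)) (rsucc D)) all3.
Definition check_refl := forallb (fun D => Rmem (clsf D) (clsf D)) all3.
Definition check_nojoin := forallb (fun D =>
  negb (Rmem cP (clsf D) && Rmem cQ (clsf D) && Rmem (clsf D) c1 && Rmem (clsf D) c2)) all3.

Lemma check_iso_ok : check_iso = true. Proof. vm_compute. reflexivity. Qed.
Lemma check_rot_ok : check_rot = true. Proof. vm_compute. reflexivity. Qed.
Lemma check_refl_ok : check_refl = true. Proof. vm_compute. reflexivity. Qed.
Lemma check_nojoin_ok : check_nojoin = true. Proof. vm_compute. reflexivity. Qed.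

Lemma Rsub_ok c1 c0 c : Rsub c1 c0 = true -> Rmem c1 c = true -> Rmem c0 c = true.
Proof.
  unfold Rsub, Rmem. intros H1 H2.
  rewrite forallb_forall in H1. apply existsb_exists in H2.
  destruct H2 as [x [Hx E]]. apply Nat.eqb_eq in E. subst. apply H1. exact Hx.
Qed.

Lemma inv : forall A B, prle A B -> In A all3 ->
  In B all3 /\ Rmem (clsf A) (clsf B) = true /\ rankf A <= rankf B /\
  (rankf A = rankf B -> isotopic A B).
Proof.
  intros A B H. apply clos_rt_rt1n in H.
  induction H as [A|A A1 B Hs Hr IH]; intros HA.
  - split; [exact HA|]. split.
    + pose proof check_refl_ok as C. unfold check_refl in C.
      rewrite forallb_forall in C. apply C. exact HA.
    + split; [lia|]. intros _. apply rt_refl.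
  - destruct Hs as [Hi|Hr'].
    + pose proof (iso_in _ _ Hi) as Hin.
      pose proof check_iso_ok as C. unfold check_iso in C.
      rewrite forallb_forall in C. specialize (C A HA).
      rewrite forallb_forall in C. specialize (C A1 Hin).
      apply andb_prop in C as [C C3]. apply andb_prop in C as [C1 C2].
      apply memb_In in C1. apply Nat.eqb_eq in C2.
      destruct (IH C1) as [HB [HR [Hle Hiso]]].
      split; [exact HB|]. split; [exact (Rsub_ok _ _ _ C3 HR)|].
      split; [lia|]. intros E.
      apply rt_trans with A1; [apply rt_step; exact Hi | apply Hiso; lia].
    + pose proof (rot_in _ _ Hr') as Hin.
      pose proof check_rot_ok as C. unfold check_rot in C.
      rewrite forallb_forall in C. specialize (C A HA).
      rewrite forallb_forall in C. specialize (C A1 Hin).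
      apply andb_prop in C as [C C3]. apply andb_prop in C as [C1 C2].
      apply memb_In in C1. apply Nat.ltb_lt in C2.
      destruct (IH C1) as [HB [HR [Hle Hiso]]].
      split; [exact HB|]. split; [exact (Rsub_ok _ _ _ C3 HR)|].
      split; [lia|]. intros E. lia.
Qed.

Ltac pg_tac := split; [cbv; repeat split | split; reflexivity].

Theorem mainTheorem4 : exists n : nat, 1 <= n /\ is_poset_n n /\ ~ is_lattice_n n.
Proof.
  exists 3. split; [lia|]. split.
  - intros P Q HP HQ H1 H2.
    apply prograph3_in in HP. apply prograph3_in in HQ.
    destruct (inv _ _ H1 HP) as [_ [_ [L1 I1]]].
    destruct (inv _ _ H2 HQ) as [_ [_ [L2 _]]].
    apply I1. lia.
  - intros HL.
    assert (HP : prograph 3 dP) by pg_tac.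
    assert (HQ : prograph 3 dQ) by pg_tac.
    assert (HU1 : prograph 3 dU1) by pg_tac.
    assert (HU2 : prograph 3 dU2) by pg_tac.
    destruct (HL dP dQ HP HQ) as [[J [HJ [HPJ [HQJ Hmin]]]] _].
    pose proof (prograph3_in _ HJ) as HJin.
    pose proof (Hmin dU1 HU1 prle_PU1 prle_QU1) as HJ1.
    pose proof (Hmin dU2 HU2 prle_PU2 prle_QU2) as HJ2.
    destruct (inv _ _ HPJ (prograph3_in _ HP)) as [_ [R1 _]].
    destruct (inv _ _ HQJ (prograph3_in _ HQ)) as [_ [R2 _]].
    destruct (inv _ _ HJ1 HJin) as [_ [R3 _]].
    destruct (inv _ _ HJ2 HJin) as [_ [R4 _]].
    assert (E1 : clsf dP = cP) by (vm_compute; reflexivity).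
    assert (E2 : clsf dQ = cQ) by (vm_compute; reflexivity).
    assert (E3 : clsf dU1 = c1) by (vm_compute; reflexivity).
    assert (E4 : clsf dU2 = c2) by (vm_compute; reflexivity).
    rewrite E1 in R1. rewrite E2 in R2. rewrite E3 in R3. rewrite E4 in R4.
    pose proof check_nojoin_ok as C. unfold check_nojoin in C.
    rewrite forallb_forall in C. specialize (C J HJin).
    rewrite R1, R2, R3, R4 in C. discriminate.
Qed.
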